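(* Assume the setting of the context. There exists $N$ such that every walk of length at least $N$ in $G(\sigma)$ ends at a singleton vertex if and only if the sequence $x$ is periodic.
   Context: Let $\sigma:\mathcal A^*\to\mathcal A^*$ be a primitive substitution of constant length $l\ge2$ and $x\in\mathcal A^{\mathbb Z}$ an admissible two-sided fixed point of $\sigma$ (so $x_{lj+i}=\sigma(x_j)_i$, $w_i$ being the $i$-th letter of $w$ indexed from $0$); $x$ is not assumed non-periodic here. Height $h=\max\{n\ge1 : \gcd(n,l)=1,\ n\mid g_0\}$, $g_0=\gcd\{n\ge1:x_n=x_0\}$. For $0\le i<h$, $\mathcal A_i=\{x_{i+nh}:n\in\mathbb Z\}$. Graph $G(\sigma)$: vertices are subsets of $\mathcal A$; for a subset $\mathcal C$ and $0\le i<l$ there is an edge labelled $i$ from $\mathcal C$ to $\{\sigma(b)_i : b\in\mathcal C\}$; $G(\sigma)$ is restricted to vertices reachable from $\mathcal A_0,\dots,\mathcal A_{h-1}$. $x$ is periodic if $x_{n+q}=x_n$ for all $n$ for some $q\ge1$. *)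

(* Defs.v *)
From HB Require Import structures.
From mathcomp Require Import all_boot all_order all_algebra.
Set Implicit Arguments. Unset Strict Implicit. Unset Printing Implicit Defensive.
Import Order.TTheory GRing.Theory Num.Theory.

(* A constant-length substitution of length l on the finite alphabet A is
   sigma : A -> l.-tuple A ; sigma(b)_i = tnth (sigma b) i. *)

Definition subst_word (A : finType) (l : nat) (sigma : A -> l.-tuple A)
  (w : seq A) : seq A := flatten (map (fun b => val (sigma b)) w).

Definition subst_iter (A : finType) (l : nat) (sigma : A -> l.-tuple A)
  (k : nat) (a : A) : seq A := iter k (subst_word sigma) [:: a].

Definition primitive (A : finType) (l : nat) (sigma : A -> l.-tuple A) : Prop :=
  exists k : nat, (0 < k)%N /\ forall a b : A, b \in subst_iter sigma k a.

Definition is_fixed_point (A : finType) (l : nat) (sigma : A -> l.-tuple A)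
  (x : int -> A) : Prop :=
  forall (j : int) (i : 'I_l), x (j * Posz l + Posz (i : nat))%R = tnth (sigma (x j)) i.

Definition admissible (A : finType) (l : nat) (sigma : A -> l.-tuple A)
  (x : int -> A) : Prop :=
  exists (k : nat) (a : A), infix [:: x (-1)%R; x 0%R] (subst_iter sigma k a).

(* d divides g0 = gcd {n >= 1 : x_n = x_0}, i.e. d divides every such n. *)
Definition divides_return_times (A : finType) (x : int -> A) (d : nat) : Prop :=
  forall n : nat, (0 < n)%N -> x (Posz n) = x 0%R -> (d %| n)%N.

Definition is_height (A : finType) (l : nat) (x : int -> A) (h : nat) : Prop :=
  [/\ (0 < h)%N, coprime h l, divides_return_times x h &
      forall n : nat, (0 < n)%N -> coprime n l -> divides_return_times x n ->
        (n <= h)%N].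

Definition is_height_class (A : finType) (x : int -> A) (h i : nat)
  (C : {set A}) : Prop :=
  forall a : A, a \in C <-> exists n : int, x (Posz i + n * Posz h)%R = a.

Definition edge (A : finType) (l : nat) (sigma : A -> l.-tuple A)
  (C : {set A}) (i : 'I_l) : {set A} := [set tnth (sigma b) i | b in C].

Definition walk_end (A : finType) (l : nat) (sigma : A -> l.-tuple A)
  (C : {set A}) (w : seq 'I_l) : {set A} := foldl (edge sigma) C w.

Definition vertex_of_G (A : finType) (l : nat) (sigma : A -> l.-tuple A)
  (x : int -> A) (h : nat) (C : {set A}) : Prop :=
  exists i : nat, (i < h)%N /\ exists C0 : {set A},
    is_height_class x h i C0 /\ exists u : seq 'I_l, C = walk_end sigma C0 u.

Definition periodic (A : finType) (x : int -> A) : Prop :=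
  exists q : nat, (0 < q)%N /\ forall n : int, x (n + Posz q)%R = x n.

(* Main.v *)
Require Import Defs.
From mathcomp Require Import all_boot all_order all_algebra.
From mathcomp Require Import ring zify.
From Stdlib Require Import ClassicalEpsilon.
Import GRing.Theory Num.Theory.
Set Implicit Arguments. Unset Strict Implicit. Unset Printing Implicit Defensive.

Definition wval (l : nat) (u : seq 'I_l) : nat :=
  foldl (fun acc (i : 'I_l) => acc * l + i)%N 0%N u.

Lemma wval_rcons l (u : seq 'I_l) i : wval (rcons u i) = (wval u * l + i)%N.
Proof. by rewrite /wval foldl_rcons. Qed.

Lemma fixK (A : finType) (l : nat) (sigma : A -> l.-tuple A) (x : int -> A) :
  is_fixed_point sigma x ->
  forall K (m1 m2 : int) (v : nat), x m1 = x m2 -> (v < l ^ K)%N ->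
  x (m1 * (Posz l) ^+ K + Posz v)%R = x (m2 * (Posz l) ^+ K + Posz v)%R.
Proof.
move=> fx; elim=> [|K IH] m1 m2 v e hv.
  by move: hv; rewrite expn0 ltnS leqn0 => /eqP ->; rewrite !expr0 !mulr1 !addr0.
have l0 : (0 < l)%N by case: l sigma fx hv {IH} => //; rewrite exp0n.
have hi : (v %% l < l)%N by rewrite ltn_pmod.
have hv' : (v %/ l < l ^ K)%N by rewrite ltn_divLR // -expnSr.
have E : forall m : int, (m * Posz l ^+ K.+1 + Posz v)%R =
   ((m * Posz l ^+ K + Posz (v %/ l)) * Posz l + Posz (Ordinal hi : nat))%R.
  move=> m /=; rewrite {1}(divn_eq v l) PoszD PoszM exprSr; ring.
by rewrite !E !fx (IH m1 m2).
Qed.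

Lemma walk_char (A : finType) (l : nat) (sigma : A -> l.-tuple A) (x : int -> A)
  (h r : nat) (C0 : {set A}) :
  is_fixed_point sigma x ->
  (forall a, a \in C0 <-> exists n : int, x (Posz r + n * Posz h)%R = a) ->
  forall u a, a \in walk_end sigma C0 u <->
   exists n : int, x ((Posz r + n * Posz h) * (Posz l) ^+ (size u) + Posz (wval u))%R = a.
Proof.
move=> fx hC; elim/last_ind=> [|u i IH] a.
  rewrite /walk_end /= expr0 /wval /=; split=> [/hC [n e]|[n e]]; [exists n|apply/hC; exists n]; by rewrite -e ?mulr1 ?addr0.
rewrite /walk_end foldl_rcons -/(walk_end sigma C0 u) size_rcons wval_rcons.
split.
  case/imsetP=> b /IH [n <-] ->; exists n; rewrite -fx; congr x.
  rewrite PoszD PoszM exprSr; ring.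
case=> n <-; apply/imsetP; exists (x ((Posz r + n * Posz h) * (Posz l) ^+ (size u) + Posz (wval u))%R).
  by apply/IH; exists n.
rewrite -fx; congr x; rewrite PoszD PoszM exprSr; ring.
Qed.

Lemma per_int (A : finType) (x : int -> A) (q : nat) :
  (forall n : int, x (n + Posz q)%R = x n) -> forall (k j : int), x (j + k * Posz q)%R = x j.
Proof.
move=> hq.
have hn : forall (k : nat) (j : int), x (j + Posz k * Posz q)%R = x j.
  elim=> [|k IH] j; first by rewrite mul0r addr0.
  by rewrite -(addn1 k) PoszD mulrDl mul1r addrA hq IH.
case=> k j; first exact: hn.
rewrite NegzE -(hn k.+1 (j + - Posz k.+1 * Posz q)%R); congr x; ring.
Qed.

Lemma digits_ex (l : nat) : (0 < l)%N -> forall K t, (t < l ^ K)%N ->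
  exists w : seq 'I_l, size w = K /\ wval w = t.
Proof.
move=> l0; elim=> [|K IH] t ht.
  by exists [::]; move: ht; rewrite expn0 ltnS leqn0 => /eqP ->.
have hi : (t %% l < l)%N by rewrite ltn_pmod.
have [|w [sw vw]] := IH (t %/ l); first by rewrite ltn_divLR // -expnSr.
exists (rcons w (Ordinal hi)); rewrite size_rcons wval_rcons sw vw /=.
by split=> //; rewrite -divn_eq.
Qed.

Lemma min_period (A : finType) (x : int -> A) : periodic x ->
  exists p, [/\ (0 < p)%N, (forall n : int, x (n + Posz p)%R = x n) &
    forall q, (0 < q)%N -> (forall n : int, x (n + Posz q)%R = x n) -> (p <= q)%N].
Proof.
case=> Q [Q0 hQ].
suff: forall m q, (q <= m)%N -> (0 < q)%N -> (forall n : int, x (n + Posz q)%R = x n) ->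
  exists p, [/\ (0 < p)%N, (forall n : int, x (n + Posz p)%R = x n) &
    forall q, (0 < q)%N -> (forall n : int, x (n + Posz q)%R = x n) -> (p <= q)%N].
  by move=> H; exact: (H Q Q)...
elim=> [|m IH] q qm q0 hq; first by case: q qm q0 hq.
case: (Classical_Prop.classic (exists q', [/\ (0 < q')%N, (q' < q)%N &
   forall n : int, x (n + Posz q')%R = x n])).
  case=> q' [q'0 q'q hq']; apply: (IH q') => //; exact: leq_trans q'q qm.
move=> nq; exists q; split=> // q' q'0 hq'; rewrite leqNgt; apply/negP=> lt.
by apply: nq; exists q'.
Qed.

Lemma dvd_pow (l : nat) : (0 < l)%N -> forall m, (0 < m)%N ->
  (forall q, prime q -> (q %| m)%N -> (q %| l)%N) -> (m %| l ^ m)%N.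
Proof.
move=> l0 m0'.
suff H : forall M m, (m <= M)%N -> (0 < m)%N ->
  (forall q, prime q -> (q %| m)%N -> (q %| l)%N) -> (m %| l ^ m)%N by exact: H.
elim=> [|M IH] m mM m0 hp; first by case: m mM m0 hp.
have [m1|m1] := leqP m 1.
  by have -> : m = 1%N by apply/eqP; rewrite eqn_leq m1.
set q := pdiv m.
have pq : prime q by rewrite pdiv_prime.
have qm : (q %| m)%N by rewrite pdiv_dvd.
have q1 : (1 < q)%N by rewrite prime_gt1.
set m' := (m %/ q)%N.
have em : m = (q * m')%N by rewrite /m' mulnC divnK.
have m'0 : (0 < m')%N by rewrite /m' divn_gt0 ?prime_gt0 // dvdn_leq.
have m'm : (m' < m)%N by rewrite /m' ltn_Pdiv.
have hm' : (m' %| l ^ m')%N.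
  apply: IH => //; first by rewrite -ltnS (leq_trans m'm).
  move=> r pr rm; apply: hp => //; rewrite em; exact: dvdn_mull.
rewrite {1}em; apply: (dvdn_trans (dvdn_mul (hp q pq qm) hm')).
by rewrite -expnS dvdn_exp2l.
Qed.

Lemma PoszX' (l K : nat) : Posz (l ^ K) = (Posz l ^+ K)%R.
Proof. by elim: K => [|K IH]; rewrite ?expr0 // expnS PoszM IH exprS. Qed.

Lemma nonneg_nat (z : int) : (0 <= z)%R -> exists v : nat, z = Posz v.
Proof. by case: z => // v _; exists v. Qed.

Lemma per_to_sync (A : finType) (l : nat) (sigma : A -> l.-tuple A)
  (x : int -> A) (h : nat) :
  (2 <= l)%N -> is_fixed_point sigma x -> is_height l x h -> periodic x ->
  (exists N : nat, forall (C : {set A}) (w : seq 'I_l),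
      vertex_of_G sigma x h C -> (N <= size w)%N ->
      #|walk_end sigma C w| = 1%N).
Proof.
move=> l2 fx [h0 hcop hdiv hmax] /min_period [p [p0 hp pmin]].
have l0 : (0 < l)%N by apply: leq_trans l2.
have pl : (p < l ^ p)%N by rewrite ltn_expl.
have key : forall n : nat, (0 < n)%N -> x (Posz n) = x 0%R -> (p %| l ^ p * n)%N.
  move=> n n0 xn.
  have ht : forall j : int, x (j + Posz (l ^ p * n))%R = x j.
    move=> j.
    have [v ev] := nonneg_nat (modz_ge0 j (d := Posz p) (lt0r_neq0 (p0 : (0 < Posz p)%R))).
    have vp : (v < p)%N.
      by have := ltz_pmod j (p0 : (0 < Posz p)%R); rewrite ev.
    have vl : (v < l ^ p)%N by apply: ltn_trans pl.
    have ej := divz_eq j (Posz p); rewrite ev in ej.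
    have -> : (j + Posz (l ^ p * n))%R = (Posz n * Posz l ^+ p + Posz v + (j %/ Posz p)%Z * Posz p)%R.
      by rewrite {1}ej mulnC PoszM PoszX'; ring.
    rewrite per_int // [in RHS]ej [in RHS]addrC per_int //.
    have := fixK fx xn vl; rewrite mul0r add0r => ->; by [].
  have hm := pmin (l ^ p * n %% p)%N.
  rewrite /dvdn; apply/negP => /negP; rewrite -lt0n => m0.
  have : (p <= l ^ p * n %% p)%N.
    apply: hm => // j.
    rewrite -(per_int hp (Posz (l ^ p * n %/ p)) (j + Posz (l ^ p * n %% p))%R) -(ht j).
    by congr x; rewrite [in RHS](divn_eq (l ^ p * n) p) PoszD PoszM; ring.
  by rewrite leqNgt ltn_pmod.
have hp_ret : (h %| p)%N by apply: hdiv => //; rewrite -[Posz p]add0r hp.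
have primes_l : forall q, prime q -> (q %| p %/ h)%N -> (q %| l)%N.
  move=> q pq qd; apply/negPn/negP => nql.
  have cq : coprime (q * h) l by rewrite coprimeMl hcop andbT prime_coprime.
  have : (q * h <= h)%N.
    apply: hmax; first by rewrite muln_gt0 prime_gt0.
      exact: cq.
    move=> n n0 xn.
    have qhp : (q * h %| p)%N by rewrite -(divnK hp_ret) dvdn_pmul2r.
    have := dvdn_trans qhp (key n n0 xn).
    by rewrite Gauss_dvdr // coprimeXr.
  by rewrite -{2}(mul1n h) leq_pmul2r // leqNgt prime_gt1.
have ph0 : (0 < p %/ h)%N by rewrite divn_gt0 // dvdn_leq.
have dph := dvd_pow l0 ph0 primes_l.
exists p => C w [r [rh [C0 [hC [u ->]]]]] sw.
rewrite /walk_end -foldl_cat -/(walk_end sigma C0 (u ++ w)).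
set K := size (u ++ w).
have pK : (p %| l ^ K * h)%N.
  rewrite -(divnK hp_ret) dvdn_pmul2r //.
  apply: dvdn_trans dph _; rewrite dvdn_exp2l //.
  rewrite /K size_cat; apply: leq_trans (leq_addl _ _).
  apply: leq_trans sw; exact: leq_div.
case/dvdnP: pK => c ec.
apply/eqP/cards1P; exists (x (Posz r * Posz l ^+ K + Posz (wval (u ++ w)))%R).
apply/setP => a; rewrite in_set1.
have hc := walk_char fx hC (u ++ w) a.
apply/idP/eqP.
  move=> ha; have [n <-] := proj1 hc ha.
  have -> : ((Posz r + n * Posz h) * Posz l ^+ size (u ++ w) + Posz (wval (u ++ w)))%R =
    (Posz r * Posz l ^+ K + Posz (wval (u ++ w)) + (n * Posz c) * Posz p)%R.
    rewrite -mulrA -PoszM -ec PoszM PoszX' /K; ring.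
  by rewrite per_int.
by move=> e; apply: (proj2 hc); exists 0%R; rewrite e mul0r addr0.
Qed.

Lemma sync_to_per (A : finType) (l : nat) (sigma : A -> l.-tuple A)
  (x : int -> A) (h : nat) :
  (2 <= l)%N -> is_fixed_point sigma x -> (0 < h)%N ->
  (exists N : nat, forall (C : {set A}) (w : seq 'I_l),
      vertex_of_G sigma x h C -> (N <= size w)%N ->
      #|walk_end sigma C w| = 1%N) -> periodic x.
Proof.
move=> l2 fx h0 [N HN].
have l0 : (0 < l)%N by apply: leq_trans l2.
pose Cl (r : nat) : {set A} := [set a | if excluded_middle_informative
   (exists k : int, x (Posz r + k * Posz h)%R = a) then true else false].
have hCl : forall r, is_height_class x h r (Cl r).
  move=> r a; rewrite inE; case: excluded_middle_informative => [e|nn].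
    by split.
  by split=> // /nn.
exists (l ^ N * h)%N; split; first by rewrite muln_gt0 expn_gt0 l0.
move=> n.
have lN0 : (0 < Posz (l ^ N))%R by rewrite ltz_nat expn_gt0 l0.
have [tn et] := nonneg_nat (modz_ge0 n (lt0r_neq0 lN0)).
have tnl : (tn < l ^ N)%N by have := ltz_pmod n lN0; rewrite et.
set M := (n %/ Posz (l ^ N))%Z.
have h0' : (0 < Posz h)%R by [].
have [rn er] := nonneg_nat (modz_ge0 M (lt0r_neq0 h0')).
have rnh : (rn < h)%N by have := ltz_pmod M h0'; rewrite er.
set k := (M %/ Posz h)%Z.
have en : n = ((Posz rn + k * Posz h) * Posz l ^+ N + Posz tn)%R.
  by rewrite {1}(divz_eq n (Posz (l ^ N))) et -/M {1}(divz_eq M (Posz h)) er -/k PoszX'; ring.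
have [w [sw vw]] := digits_ex l0 tnl.
have hv : vertex_of_G sigma x h (Cl rn).
  by exists rn; split=> //; exists (Cl rn); split=> //; exists [::].
have := HN _ w hv; rewrite sw => /(_ (leqnn N)) /eqP /cards1P [a ea].
have hc := walk_char fx (hCl rn) w.
have m1 : x n \in walk_end sigma (Cl rn) w.
  by apply/(proj2 (hc _)); exists k; rewrite sw vw en.
have m2 : x (n + Posz (l ^ N * h))%R \in walk_end sigma (Cl rn) w.
  apply/(proj2 (hc _)); exists (k + 1)%R; rewrite sw vw en PoszM PoszX'; congr x; ring.
by move: m1 m2; rewrite ea !in_set1 => /eqP -> /eqP ->.
Qed.

Theorem mainTheorem17 (A : finType) (l : nat) (sigma : A -> l.-tuple A)
  (x : int -> A) (h : nat) :
  (2 <= l)%N ->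
  primitive sigma ->
  is_fixed_point sigma x ->
  admissible sigma x ->
  is_height l x h ->
  (exists N : nat, forall (C : {set A}) (w : seq 'I_l),
      vertex_of_G sigma x h C -> (N <= size w)%N ->
      #|walk_end sigma C w| = 1%N)
  <-> periodic x.
Proof.
move=> l2 _ fx _ hh; split.
  by case: hh => h0 _ _ _ H; exact: (sync_to_per l2 fx h0 H).
by move=> H; exact: (per_to_sync l2 fx hh H).
Qed.
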